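(* Let $\mathcal{A}$ be a ring with identity $1$ and let $a,b,d\in\mathcal{A}$. The following statements are equivalent: (i) $b$ is the Mary (natural) inverse of $a$ along $d$, i.e. $bab=b$, $b\mathcal{A}=d\mathcal{A}$ and $\mathcal{A}b=\mathcal{A}d$; (ii) $b$ is an outer inverse of $a$ (i.e. $bab=b$), $d$ is inner regular, and there exists a reflexive inverse $t\in\mathcal{A}$ of $d$ (i.e. $dtd=d$ and $tdt=t$) such that $ba=dt$ and $ab=td$.
   Context: For $x,y$ in a ring $\mathcal{A}$ with identity, $x\mathcal{A}\subset y\mathcal{A}$ means there exists $z\in\mathcal{A}$ with $x=yz$, and $x\mathcal{A}=y\mathcal{A}$ means both inclusions hold; similarly $\mathcal{A}x\subset\mathcal{A}y$ means $x=zy$ for some $z\in\mathcal{A}$. An element $d$ is inner regular if there is $t\in\mathcal{A}$ with $dtd=d$. An element $b$ satisfying $bab=b$, $b\mathcal{A}=d\mathcal{A}$, $\mathcal{A}b=\mathcal{A}d$ is called the Mary (natural) inverse of $a$ along $d$; it is unique when it exists. *)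

(* Defs.v *)
From mathcomp Require Import all_boot all_algebra.
Set Implicit Arguments. Unset Strict Implicit. Unset Printing Implicit Defensive.
Import GRing.Theory.
Local Open Scope ring_scope.

(* Principal right/left ideal inclusions in a (possibly noncommutative) ring. *)
Definition rsub (R : pzRingType) (x y : R) : Prop := exists z : R, x = y * z.
Definition lsub (R : pzRingType) (x y : R) : Prop := exists z : R, x = z * y.

Definition inner_regular (R : pzRingType) (d : R) : Prop := exists t : R, d * t * d = d.

Definition mary_inverse (R : pzRingType) (a d b : R) : Prop :=
  b * a * b = b /\ (rsub b d /\ rsub d b) /\ (lsub b d /\ lsub d b).

(* Main.v *)
Require Import Defs.
From mathcomp Require Import all_boot all_algebra.
Local Open Scope ring_scope.
Import GRing.Theory.

Lemma refl_aux (R : pzRingType) (a b d t0 : R) :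
  b * a * b = b -> b * a * d = d -> d * t0 = b * a -> t0 * d = a * b ->
  exists t : R, d * t * d = d /\ t * d * t = t /\ b * a = d * t /\ a * b = t * d.
Proof.
move=> hb hd h1 h2.
have baba : b * a * (b * a) = b * a by rewrite mulrA hb.
have abab : a * b * (a * b) = a * b by rewrite -!mulrA (mulrA b a b) hb.
exists (t0 * d * t0).
have e1 : d * (t0 * d * t0) = b * a by rewrite !mulrA h1 -(mulrA _ d) h1 baba.
have e2 : t0 * d * t0 * d = a * b by rewrite -(mulrA (t0 * d) t0 d) h2 abab.
split; first by rewrite e1 hd.
split; first by rewrite e2 h2 mulrA abab.
by split.
Qed.

Theorem theorem2p3 (R : pzRingType) (a b d : R) :
  mary_inverse a d b <->
  (b * a * b = b /\ inner_regular d /\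
   exists t : R, d * t * d = d /\ t * d * t = t /\ b * a = d * t /\ a * b = t * d).
Proof.
split.
  move=> [hb [[[x hx] [y hy]] [[u hu] [v hv]]]].
  have hd : b * a * d = d by rewrite hy mulrA hb.
  have hd' : d * a * b = d by rewrite hv -!mulrA (mulrA b) hb.
  set t0 := x * a + a * u - x * a * d * a * u.
  have h1 : d * t0 = b * a.
    rewrite /t0 mulrBr mulrDr !mulrA -hx.
    rewrite -(mulrA b a d) -(mulrA (b * (a * d)) a u) !mulrA hd.
    by rewrite addrK.
  have h2 : t0 * d = a * b.
    rewrite /t0 mulrBl mulrDl -!mulrA -hu.
    rewrite (mulrA d a b) hd'.
    by rewrite addrC addKr.
  have [t ht] := @refl_aux R a b d t0 hb hd h1 h2.
  split=> //; split; last by exists t.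
  by exists t; case: ht.
move=> [hb [_ [t [h1 [h2 [h3 h4]]]]]].
split=> //; split; split.
- exists (t * b); rewrite mulrA; change (b = d * t * b); by rewrite -h3 hb.
- exists (a * d); rewrite mulrA; change (d = b * a * d); by rewrite h3 h1.
- exists (b * t); rewrite -mulrA; change (b = b * (t * d)); by rewrite -h4 mulrA hb.
- exists (d * a); rewrite -mulrA; change (d = d * (a * b)); by rewrite h4 mulrA h1.
Qed.
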